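(* Let $\mathcal N$ be a normal network on $X$. If $\mathcal N$ has at least one reticulation and $|X|\ge 4$, or $\mathcal N$ has at least two reticulations, or $|X|\ge 5$, then $\mathcal N$ displays at least one quad.
   Context: Phylogenetic network on $X$ (rooted, binary): rooted acyclic digraph without parallel arcs; root has in-degree $0$, out-degree $2$; leaves (out-degree $0$) have in-degree $1$ and form $X$; other vertices are tree vertices (in-degree $1$, out-degree $2$) or reticulations (in-degree $2$, out-degree $1$). A reticulation arc $(u,v)$ is a shortcut if another directed path from $u$ to $v$ exists. Tree-child: every non-leaf vertex has a child that is a tree vertex or leaf; normal: tree-child with no shortcuts. A quad is a caterpillar on four leaves, i.e. a rooted binary phylogenetic tree $(x_1,x_2,x_3,x_4)$ in which $x_1,x_2$ share a parent $p$, the parent of $x_3$ is the parent of $p$, and the parent of $x_4$ is the parent of the parent of $x_3$. The network displays a tree on a subset of $X$ if the tree can be obtained from the network by deleting arcs and vertices and suppressing in-degree-one out-degree-one vertices. *)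

(* Defs.v *)
From mathcomp Require Import all_boot.
Set Implicit Arguments. Unset Strict Implicit. Unset Printing Implicit Defensive.

(* A directed graph on a finite vertex type V is given by its arc relation
   a : rel V (a u v = there is an arc (u,v)); this excludes parallel arcs. *)
Section Net.
Variables (V : finType) (a : rel V).

Definition indeg (v : V) : nat := #|[pred u | a u v]|.
Definition outdeg (v : V) : nat := #|[pred w | a v w]|.

Definition dpath (u v : V) (s : seq V) : bool :=
  [&& path a u s, last u s == v & s != [::]].

(* interior vertices of the path u :: s (all but the endpoints) *)
Definition interior (s : seq V) : seq V := take (size s).-1 s.

Definition acyclic : Prop :=
  forall (v : V) (s : seq V), path a v s -> last v s = v -> s = [::].

Definition is_root (v : V) : bool := (indeg v == 0) && (outdeg v == 2).
Definition is_leaf (v : V) : bool := (indeg v == 1) && (outdeg v == 0).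
Definition is_tree_vertex (v : V) : bool := (indeg v == 1) && (outdeg v == 2).
Definition is_reticulation (v : V) : bool := (indeg v == 2) && (outdeg v == 1).

(* rooted binary phylogenetic network (leaf set X = the set of leaves) *)
Definition phylo_network : Prop :=
  acyclic /\
  exists rho : V, is_root rho /\
    forall v : V, v != rho ->
      [|| is_leaf v, is_tree_vertex v | is_reticulation v].

Definition tree_child : Prop :=
  forall v : V, ~~ is_leaf v ->
    exists w : V, a v w && (is_tree_vertex w || is_leaf w).

(* reticulation arc (u,v) is a shortcut if another directed path u ~> v exists *)
Definition no_shortcuts : Prop :=
  forall (u v : V) (s : seq V),
    a u v -> is_reticulation v -> dpath u v s -> s = [:: v].

Definition normal_network : Prop :=
  [/\ phylo_network, tree_child & no_shortcuts].

Definition num_leaves : nat := #|[pred v | is_leaf v]|.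
Definition num_reticulations : nat := #|[pred v | is_reticulation v]|.

(* N displays the quad (x1,x2,x3,x4): N contains a subdivision of the
   caterpillar with internal vertices p (parent of x1,x2), q (parent of
   p and x3), r (root, parent of q and x4), i.e. images r,q,p and six
   directed paths, one for each tree arc, whose interiors are pairwise
   disjoint and avoid the seven images, the images being distinct.
   Deleting everything else and suppressing yields the quad. *)
Definition displays_quad_on (x1 x2 x3 x4 : V) : Prop :=
  [/\ is_leaf x1, is_leaf x2, is_leaf x3 & is_leaf x4] /\
  exists (r q p : V) (srq srx4 sqp sqx3 spx1 spx2 : seq V),
    [/\ dpath r q srq, dpath r x4 srx4, dpath q p sqp,
        dpath q x3 sqx3 & dpath p x1 spx1] /\ dpath p x2 spx2 /\
        uniq (flatten [:: interior srq; interior srx4; interior sqp;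
                          interior sqx3; interior spx1; interior spx2]
              ++ [:: r; q; p; x1; x2; x3; x4]).

Definition displays_a_quad : Prop :=
  exists x1 x2 x3 x4 : V, displays_quad_on x1 x2 x3 x4.

End Net.

(* Main.v *)
Require Import Defs.
From mathcomp Require Import all_boot zify.
From Stdlib Require Import Classical.
Set Implicit Arguments. Unset Strict Implicit. Unset Printing Implicit Defensive.

Lemma indeg1_uniq (V : finType) (a : rel V) v u u' :
  indeg a v = 1 -> a u v -> a u' v -> u = u'.
Proof.
move=> H hu hu'.
have: #|[pred x | a x v]| <= 1 by rewrite -/(indeg a v) H.
move/card_le1_eqP => /(_ u u'); rewrite !inE => /(_ hu hu') ->. by [].
Qed.

Lemma outdeg1_uniq (V : finType) (a : rel V) v u u' :
  outdeg a v = 1 -> a v u -> a v u' -> u = u'.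
Proof.
move=> H hu hu'.
have: #|[pred x | a v x]| <= 1 by rewrite -/(outdeg a v) H.
move/card_le1_eqP => /(_ u u'); rewrite !inE => /(_ hu hu') ->. by [].
Qed.

Lemma outdeg0_no (V : finType) (a : rel V) v w : outdeg a v = 0 -> ~~ a v w.
Proof. move/card0_eq => /(_ w). by rewrite !inE => ->. Qed.

Lemma indeg0_no (V : finType) (a : rel V) v w : indeg a v = 0 -> ~~ a w v.
Proof. move/card0_eq => /(_ w). by rewrite !inE => ->. Qed.

Lemma outdeg2_three (V : finType) (a : rel V) v x y z :
  outdeg a v = 2 -> a v x -> a v y -> a v z -> x != y -> x != z -> y != z -> False.
Proof.
move=> H hx hy hz nxy nxz nyz.
have: 3 <= outdeg a v.
  apply/card_geqP; exists [:: x; y; z]; split => //.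
    by rewrite /= !inE negb_or nxy nxz nyz.
  by move=> w; rewrite !inE => /or3P [] /eqP ->.
by rewrite H.
Qed.

Lemma outdeg2_other (V : finType) (a : rel V) v c :
  outdeg a v = 2 -> a v c -> exists c', a v c' /\ c' != c.
Proof.
move=> H hc.
have: 1 < #|[pred x | a v x]| by rewrite -/(outdeg a v) H.
case/card_gt1P => x [y [hx hy nxy]]. rewrite !inE in hx hy.
case: (eqVneq x c) => [exc|nxc]; last by exists x.
exists y; split => //. by rewrite -exc eq_sym.
Qed.

Lemma indeg2_two (V : finType) (a : rel V) v :
  indeg a v = 2 -> exists u u', [/\ a u v, a u' v & u != u'].
Proof.
move=> H.
have: 1 < #|[pred x | a x v]| by rewrite -/(indeg a v) H.
case/card_gt1P => x [y [hx hy nxy]]. rewrite !inE in hx hy. by exists x, y.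
Qed.

Lemma indeg_pos (V : finType) (a : rel V) u v : a u v -> 0 < indeg a v.
Proof. move=> h; apply/card_gt0P; exists u; by rewrite inE. Qed.

Lemma outdeg_pos (V : finType) (a : rel V) u v : a u v -> 0 < outdeg a u.
Proof. move=> h; apply/card_gt0P; exists v; by rewrite inE. Qed.

Definition ch (V : finType) (a : rel V) (v : V) : V :=
  odflt v [pick w | a v w && (is_tree_vertex a w || is_leaf a w)].

Definition tp (V : finType) (a : rel V) (x w : V) : Prop :=
  exists k, w = iter k (ch a) x.

Lemma ch_leaf (V : finType) (a : rel V) v : is_leaf a v -> ch a v = v.
Proof.
case/andP => _ /eqP h; rewrite /ch; case: pickP => //= w /andP [hw _].
by move: (outdeg0_no w h); rewrite hw.
Qed.

Lemma ch_spec (V : finType) (a : rel V) v : tree_child a -> ~~ is_leaf a v ->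
  a v (ch a v) && (is_tree_vertex a (ch a v) || is_leaf a (ch a v)).
Proof.
move=> Htc hv; rewrite /ch; case: pickP => //= hn.
case: (Htc v hv) => w hw. by move: (hn w); rewrite hw.
Qed.

Lemma connect_ch (V : finType) (a : rel V) v : tree_child a -> connect a v (ch a v).
Proof.
move=> Htc; case: (boolP (is_leaf a v)) => hv; first by rewrite ch_leaf.
by apply: connect1; case/andP: (ch_spec Htc hv).
Qed.

Lemma connect_iter (V : finType) (a : rel V) k x : tree_child a ->
  connect a x (iter k (ch a) x).
Proof.
move=> Htc; elim: k => [|k IH]; first exact: connect0.
by rewrite iterS; apply: connect_trans IH (connect_ch _ Htc).
Qed.

Lemma tp_connect (V : finType) (a : rel V) x w : tree_child a -> tp a x w -> connect a x w.
Proof. by move=> Htc [k ->]; apply: connect_iter. Qed.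

Lemma noback (V : finType) (a : rel V) u v : acyclic a -> a u v -> connect a v u -> False.
Proof.
move=> Hac huv /connectP [p hp hl].
have := Hac u (v :: p). rewrite /= huv hp => /(_ isT). by move=> /(_ (esym hl)).
Qed.

Lemma tp_refl (V : finType) (a : rel V) x : tp a x x.
Proof. by exists 0. Qed.

Lemma tp_trans (V : finType) (a : rel V) x y z : tp a x y -> tp a y z -> tp a x z.
Proof. by move=> [i ->] [j ->]; exists (j + i); rewrite iterD. Qed.

Lemma tp_ch (V : finType) (a : rel V) x : tp a x (ch a x).
Proof. by exists 1. Qed.

Lemma tp_lin (V : finType) (a : rel V) x y z : tp a x y -> tp a x z -> tp a y z \/ tp a z y.
Proof.
move=> [i ->] [j ->]; case: (leqP i j) => hij.
  by left; exists (j - i); rewrite -iterD subnK.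
by right; exists (i - j); rewrite -iterD subnK // ltnW.
Qed.

Lemma leaf_fix (V : finType) (a : rel V) x i j : is_leaf a (iter i (ch a) x) -> i <= j ->
  iter j (ch a) x = iter i (ch a) x.
Proof.
move=> hl /subnK <-; elim: (j - i) => [|k IH] //=.
by rewrite IH ch_leaf.
Qed.

Lemma cyc_iter (V : finType) (a : rel V) x i j : acyclic a -> tree_child a ->
  iter i (ch a) x = iter j (ch a) x -> i < j -> ~~ is_leaf a (iter i (ch a) x) -> False.
Proof.
move=> Hac Htc he hij hnl.
case/andP: (ch_spec Htc hnl) => harc _.
apply: (noback Hac harc).
have E : iter (j - i.+1) (ch a) (ch a (iter i (ch a) x)) = iter i (ch a) x.
  by rewrite -iterS -iterD subnK.
rewrite -[X in connect _ _ X]E; exact: connect_iter.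
Qed.


Lemma tl_indeg1 (V : finType) (a : rel V) w :
  is_tree_vertex a w || is_leaf a w -> indeg a w = 1.
Proof. by case/orP => /andP [/eqP ->]. Qed.

Lemma merge_aux (V : finType) (a : rel V) x y n : tree_child a ->
  forall i j, i + j <= n -> iter i (ch a) x = iter j (ch a) y -> tp a x y \/ tp a y x.
Proof.
move=> Htc; elim: n => [|n IH] i j.
  rewrite leqn0 addn_eq0 => /andP [/eqP -> /eqP ->] /= ->; left; exact: tp_refl.
case: i => [|i]; first by move=> _ /= ->; right; exists j.
case: j => [|j]; first by move=> _ /= <-; left; exists i.+1.
rewrite !iterS addSn addnS !ltnS => hle he.
case: (boolP (is_leaf a (iter i (ch a) x))) => hx.
  rewrite (ch_leaf hx) in he; apply: (IH i j.+1); first by rewrite addnS.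
  by rewrite he.
case: (boolP (is_leaf a (iter j (ch a) y))) => hy.
  rewrite (ch_leaf hy) in he; apply: (IH i.+1 j); first by rewrite addSn.
  by rewrite iterS he.
case/andP: (ch_spec Htc hx) => ax tx; case/andP: (ch_spec Htc hy) => ay ty.
rewrite he in ax tx.
have := indeg1_uniq (tl_indeg1 ty) ax ay => e.
apply: (IH i j); [exact: ltnW | exact: e].
Qed.

Lemma tp_merge (V : finType) (a : rel V) x y w : tree_child a ->
  tp a x w -> tp a y w -> tp a x y \/ tp a y x.
Proof.
move=> Htc [i hi] [j hj]; apply: (merge_aux (n := i + j) Htc (i:=i) (j:=j)) => //.
by rewrite -hi -hj.
Qed.

Lemma tp_parent (V : finType) (a : rel V) x u y i : tree_child a ->
  a u y -> y = iter i (ch a) x -> y = x \/ (tp a x u /\ y = ch a u).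
Proof.
move=> Htc hu; elim: i y hu => [|i IH] y hu; first by left.
rewrite iterS => hy.
case: (boolP (is_leaf a (iter i (ch a) x))) => hx.
  by rewrite (ch_leaf hx) in hy; apply: IH.
case/andP: (ch_spec Htc hx); rewrite -hy => ay ty.
have e := indeg1_uniq (tl_indeg1 ty) ay hu.
by right; split; [exists i | rewrite hy e].
Qed.

Lemma shared (V : finType) (a : rel V) u u' h : phylo_network a -> no_shortcuts a ->
  a u h -> a u' h -> u != u' -> connect a u u' -> False.
Proof.
move=> [Hac [rho [Hrt Hcls]]] Hns hu hu' nuu /connectP [s hs hl].
have hnr : h != rho.
  apply/eqP => ehr; case/andP: Hrt => /eqP h0 _.
  by move: (indeg0_no u h0); rewrite -ehr hu.
case/or3P: (Hcls h hnr) => hh.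
- have := indeg1_uniq (tl_indeg1 (a:=a) (w:=h) _) hu hu'; rewrite hh orbT => /(_ isT) e.
  by rewrite e eqxx in nuu.
- have := indeg1_uniq (tl_indeg1 (a:=a) (w:=h) _) hu hu'; rewrite hh => /(_ isT) e.
  by rewrite e eqxx in nuu.
have := Hns u h (rcons s h) hu hh.
rewrite /dpath rcons_path hs /= -hl hu' last_rcons eqxx.
case: s hs hl => [|z s] _ hl.
  by rewrite /= in hl; rewrite hl eqxx in nuu.
by move=> /(_ isT); rewrite rcons_cons; case; case: s {hl}.
Qed.

Lemma sib (V : finType) (a : rel V) u x y w : acyclic a -> tree_child a ->
  a u x -> a u y -> x != y -> tp a x w -> tp a y w -> False.
Proof.
move=> Hac Htc hx hy nxy tx ty.
case: (tp_merge Htc tx ty) => [[k hk]|[k hk]].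
- case: (tp_parent Htc hy hk) => [e|[tu _]]; first by rewrite e eqxx in nxy.
  exact: (noback Hac hx (tp_connect Htc tu)).
- case: (tp_parent Htc hx hk) => [e|[tu _]]; first by rewrite e eqxx in nxy.
  exact: (noback Hac hy (tp_connect Htc tu)).
Qed.

Definition segP (V : finType) (a : rel V) x (zo : option V) w :=
  tp a x w /\ (forall z, zo = Some z -> ~ tp a z w).

Lemma seg_half (V : finType) (a : rel V) x zx uy y w : tree_child a ->
  tp a x y -> a uy y -> x != y -> segP a x zx w -> tp a y w -> segP a x zx uy.
Proof.
move=> Htc [k hk] hy nxy [tw nz] tyw.
case: (tp_parent Htc hy hk) => [e|[tu ey]]; first by rewrite e eqxx in nxy.
split => // z hz tzu; apply: (nz z hz).
apply: (tp_trans tzu); apply: tp_trans tyw; rewrite ey; exact: tp_ch.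
Qed.

Lemma seg_disj (V : finType) (a : rel V) ux x uy y zx zy w : tree_child a ->
  a ux x -> a uy y -> x != y -> segP a x zx w -> segP a y zy w ->
  ~ segP a x zx uy -> ~ segP a y zy ux -> False.
Proof.
move=> Htc hx hy nxy sx sy nx ny.
case: (tp_merge Htc sx.1 sy.1) => t.
- by apply: nx; apply: (seg_half Htc t hy nxy sx sy.1).
- by apply: ny; apply: (seg_half Htc t hx _ sy sx.1); rewrite eq_sym.
Qed.

Lemma seg_cyc (V : finType) (a : rel V) ux x zo u : acyclic a -> tree_child a ->
  a ux x -> connect a u ux -> ~ segP a x zo u.
Proof.
move=> Hac Htc hx cu [t _]; apply: (noback Hac hx).
exact: connect_trans (tp_connect Htc t) cu.
Qed.

Lemma uniq_traj (V : finType) (a : rel V) x n : acyclic a -> tree_child a ->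
  (forall i, i < n -> ~~ is_leaf a (iter i (ch a) x)) -> uniq (traject (ch a) x n.+1).
Proof.
move=> Hac Htc hnl; rewrite looping_uniq; apply/trajectP => [[i hi he]].
exact: (cyc_iter Hac Htc (esym he) hi (hnl i hi)).
Qed.

Lemma leaf_reach (V : finType) (a : rel V) x : acyclic a -> tree_child a ->
  exists k, is_leaf a (iter k (ch a) x).
Proof.
move=> Hac Htc; exists #|V|; apply/negPn/negP => hn.
have hnl : forall i, i < #|V| -> ~~ is_leaf a (iter i (ch a) x).
  move=> i hi; apply/negP => hl; move: hn; rewrite (leaf_fix (j := #|V|) hl) ?hl //; exact: ltnW.
have := uniq_traj Hac Htc hnl; move/card_uniqP; rewrite size_traject => e.
by have := max_card (mem (traject (ch a) x #|V|.+1)); rewrite e ltnn.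
Qed.

Lemma path_traj (V : finType) (a : rel V) x k : tree_child a ->
  (forall i, i < k -> ~~ is_leaf a (iter i (ch a) x)) -> path a x (traject (ch a) (ch a x) k).
Proof.
move=> Htc; elim: k x => [|k IH] x hnl //=.
case/andP: (ch_spec Htc (hnl 0 isT)) => -> _ /=.
apply: IH => i hi; rewrite -iterSr; exact: hnl.
Qed.

Lemma interior_traj (V : finType) (f : V -> V) x n :
  interior (traject f x n.+1) = traject f x n.
Proof. by rewrite /interior trajectSr size_rcons /= -cats1 take_size_cat. Qed.


Lemma leaf_min (V : finType) (a : rel V) x : acyclic a -> tree_child a ->
  exists k, is_leaf a (iter k (ch a) x) /\ forall i, i < k -> ~~ is_leaf a (iter i (ch a) x).
Proof.
move=> Hac Htc; have ex := leaf_reach x Hac Htc.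
case: (ex_minnP ex) => k hk hmin; exists k; split => // i hi.
apply/negP => hl; have := hmin i hl; by rewrite leqNgt hi.
Qed.

Lemma memT (V : finType) (a : rel V) x k w : acyclic a -> tree_child a ->
  (forall i, i < k -> ~~ is_leaf a (iter i (ch a) x)) ->
  w \in traject (ch a) x k -> segP a x (Some (iter k (ch a) x)) w.
Proof.
move=> Hac Htc hnl /trajectP [i hi ->]; split; first by exists i.
move=> z [<-] [j hj]; rewrite -iterD in hj.
apply: (cyc_iter Hac Htc hj _ (hnl i hi)).
exact: leq_trans hi (leq_addl _ _).
Qed.

Lemma memF (V : finType) (a : rel V) x k w :
  w \in traject (ch a) x k -> segP a x None w.
Proof. by move=> /trajectP [i hi ->]; split => //; exists i. Qed.

Lemma uniq_catD (T : eqType) (s1 s2 : seq T) : uniq s1 -> uniq s2 ->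
  (forall w, w \in s1 -> w \in s2 -> False) -> uniq (s1 ++ s2).
Proof.
move=> u1 u2 d; rewrite cat_uniq u1 u2 /= andbT; apply/hasPn => w w2.
by apply/negP => w1; apply: (d w).
Qed.

Lemma arith7 (A B C D E F br bq bp b1 b2 b3 b4 : nat) :
  (A + (B + (C + (D + (E + (F + 0)))))) + (br + (bq + (bp + (b1 + (b2 + (b3 + (b4 + 0))))))) =
  A + (B + (b4 + 0) + (C + (D + (b3 + 0) + (E + (b1 + 0) + (F + (b2 + 0) + (br + (bq + (bp + 0)))))))).
Proof. lia. Qed.

Ltac disj_fin s1 s :=
  match goal with D : forall w, segP _ _ _ w -> segP _ _ _ w -> False |- _ => exact (D _ s1 s) end.
Ltac node_fin s1 :=
  match goal with N : segP _ _ _ _ -> False |- _ => exact (N s1) end.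
Ltac disj_close s1 :=
  repeat (match goal with H : is_true (_ || _) |- _ => case/orP: H => H end);
  match goal with
  | H : is_true (_ \in _) |- _ => first
      [ let s := fresh "s" in have s := m2 _ H; disj_fin s1 s
      | let s := fresh "s" in have s := m3 _ H; disj_fin s1 s
      | let s := fresh "s" in have s := m4 _ H; disj_fin s1 s
      | let s := fresh "s" in have s := m5 _ H; disj_fin s1 s
      | let s := fresh "s" in have s := m6 _ H; disj_fin s1 s
      | rewrite !inE in H;
        repeat (match goal with H : is_true (_ || _) |- _ => case/orP: H => H end);
        move/eqP: H => H; subst; node_fin s1 ]
  end.

Lemma quad_of_chain (V : finType) (a : rel V) r ar or q aq oq p c1 c2 :
  normal_network a ->
  a r ar -> a r or -> ar != or -> a q aq -> a q oq -> aq != oq ->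
  a p c1 -> a p c2 -> c1 != c2 ->
  tp a ar q -> tp a aq p -> ~~ is_leaf a q -> ~~ is_leaf a p -> displays_a_quad a.
Proof.
move=> [Hpn Htc Hns] Har Hor nar Haq Hoq naq Hc1 Hc2 nc tpq tpp qnl pnl.
have Hac := Hpn.1.
case: (tpq) => kq eqq. case: (tpp) => kp ep.
have hq : forall i, i < kq -> ~~ is_leaf a (iter i (ch a) ar).
  move=> i hi; apply/negP => hl; move: qnl; rewrite eqq (leaf_fix hl (ltnW hi)) hl //.
have hp : forall i, i < kp -> ~~ is_leaf a (iter i (ch a) aq).
  move=> i hi; apply/negP => hl; move: pnl; rewrite ep (leaf_fix hl (ltnW hi)) hl //.
case: (leaf_min or Hac Htc) => k4 [l4 h4].
case: (leaf_min oq Hac Htc) => k3 [l3 h3].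
case: (leaf_min c1 Hac Htc) => k1 [l1 h1].
case: (leaf_min c2 Hac Htc) => k2 [l2 h2].
have caq : connect a ar q := tp_connect Htc tpq.
have cap : connect a aq p := tp_connect Htc tpp.
have crq : connect a r q := connect_trans (connect1 Har) caq.
have cqp : connect a q p := connect_trans (connect1 Haq) cap.
have crp : connect a r p := connect_trans crq cqp.
have nrq : r != q.
  by apply/eqP => e; apply: (noback Hac Har); rewrite e.
have nqp : q != p.
  by apply/eqP => e; apply: (noback Hac Haq); rewrite e.
have nrp : r != p.
  by apply/eqP => e; apply: (noback Hac Har); rewrite e; apply: connect_trans caq cqp.
have shr := shared Hpn Hns.
have N1r : segP a ar (Some q) r -> False := seg_cyc Hac Htc Har (connect0 _ _).
have N1q : segP a ar (Some q) q -> False by move=> [_ h]; apply: (h q erefl); exact: tp_refl.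
have N1p : segP a ar (Some q) p -> False.
  move=> [t nz]; case: (tp_lin tpq t) => t'; first exact: (nz q erefl t').
  by apply: (noback Hac Haq); apply: connect_trans cap (tp_connect Htc t').
have N2r : segP a or None r -> False := seg_cyc Hac Htc Hor (connect0 _ _).
have N2q : segP a or None q -> False.
  by move=> [t _]; apply: (sib Hac Htc Hor Har _ t tpq); rewrite eq_sym.
have N2p : segP a or None p -> False.
  move=> [t _]; case: (tp_merge Htc t tpp) => [[k hk]|[k hk]].
  - case: (tp_parent Htc Haq hk) => [e|[tu _]].
      by apply: (shr r q or Hor _ nrq crq); rewrite -e.
    by apply: (sib Hac Htc Hor Har _ tu tpq); rewrite eq_sym.
  - case: (tp_parent Htc Hor hk) => [e|[tu _]].
      by apply: (shr r q or Hor _ nrq crq); rewrite e.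
    by apply: (noback Hac Haq); apply: connect_trans (tp_connect Htc tu) crq.
have N3r : segP a aq (Some p) r -> False := seg_cyc Hac Htc Haq crq.
have N3q : segP a aq (Some p) q -> False := seg_cyc Hac Htc Haq (connect0 _ _).
have N3p : segP a aq (Some p) p -> False by move=> [_ h]; apply: (h p erefl); exact: tp_refl.
have N4r : segP a oq None r -> False := seg_cyc Hac Htc Hoq crq.
have N4q : segP a oq None q -> False := seg_cyc Hac Htc Hoq (connect0 _ _).
have N4p : segP a oq None p -> False.
  by move=> [t _]; apply: (sib Hac Htc Hoq Haq _ t tpp); rewrite eq_sym.
have N5r : segP a c1 None r -> False := seg_cyc Hac Htc Hc1 crp.
have N5q : segP a c1 None q -> False := seg_cyc Hac Htc Hc1 cqp.
have N5p : segP a c1 None p -> False := seg_cyc Hac Htc Hc1 (connect0 _ _).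
have N6r : segP a c2 None r -> False := seg_cyc Hac Htc Hc2 crp.
have N6q : segP a c2 None q -> False := seg_cyc Hac Htc Hc2 cqp.
have N6p : segP a c2 None p -> False := seg_cyc Hac Htc Hc2 (connect0 _ _).
have dst : forall u u' x y, a u x -> a u' y -> u != u' -> connect a u u' -> x != y.
  move=> u u' x y hx hy nu cu; apply/eqP => e.
  by apply: (shr u u' x hx _ nu cu); rewrite e.
have d13 := dst _ _ _ _ Har Haq nrq crq.
have d14 := dst _ _ _ _ Har Hoq nrq crq.
have d15 := dst _ _ _ _ Har Hc1 nrp crp.
have d16 := dst _ _ _ _ Har Hc2 nrp crp.
have d23 := dst _ _ _ _ Hor Haq nrq crq.
have d24 := dst _ _ _ _ Hor Hoq nrq crq.
have d25 := dst _ _ _ _ Hor Hc1 nrp crp.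
have d26 := dst _ _ _ _ Hor Hc2 nrp crp.
have d35 := dst _ _ _ _ Haq Hc1 nqp cqp.
have d36 := dst _ _ _ _ Haq Hc2 nqp cqp.
have d45 := dst _ _ _ _ Hoq Hc1 nqp cqp.
have d46 := dst _ _ _ _ Hoq Hc2 nqp cqp.
have sd := seg_disj (a := a) Htc.
have D12 w : segP a ar (Some q) w -> segP a or None w -> False.
  by move=> s1 s2; exact: (seg_disj Htc Har Hor nar s1 s2 N1r N2r).
have D13 w : segP a ar (Some q) w -> segP a aq (Some p) w -> False.
  by move=> s1 s2; exact: (seg_disj Htc Har Haq d13 s1 s2 N1q N3r).
have D14 w : segP a ar (Some q) w -> segP a oq None w -> False.
  by move=> s1 s2; exact: (seg_disj Htc Har Hoq d14 s1 s2 N1q N4r).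
have D15 w : segP a ar (Some q) w -> segP a c1 None w -> False.
  by move=> s1 s2; exact: (seg_disj Htc Har Hc1 d15 s1 s2 N1p N5r).
have D16 w : segP a ar (Some q) w -> segP a c2 None w -> False.
  by move=> s1 s2; exact: (seg_disj Htc Har Hc2 d16 s1 s2 N1p N6r).
have D23 w : segP a or None w -> segP a aq (Some p) w -> False.
  by move=> s1 s2; exact: (seg_disj Htc Hor Haq d23 s1 s2 N2q N3r).
have D24 w : segP a or None w -> segP a oq None w -> False.
  by move=> s1 s2; exact: (seg_disj Htc Hor Hoq d24 s1 s2 N2q N4r).
have D25 w : segP a or None w -> segP a c1 None w -> False.
  by move=> s1 s2; exact: (seg_disj Htc Hor Hc1 d25 s1 s2 N2p N5r).
have D26 w : segP a or None w -> segP a c2 None w -> False.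
  by move=> s1 s2; exact: (seg_disj Htc Hor Hc2 d26 s1 s2 N2p N6r).
have D34 w : segP a aq (Some p) w -> segP a oq None w -> False.
  by move=> s1 s2; exact: (seg_disj Htc Haq Hoq naq s1 s2 N3q N4q).
have D35 w : segP a aq (Some p) w -> segP a c1 None w -> False.
  by move=> s1 s2; exact: (seg_disj Htc Haq Hc1 d35 s1 s2 N3p N5q).
have D36 w : segP a aq (Some p) w -> segP a c2 None w -> False.
  by move=> s1 s2; exact: (seg_disj Htc Haq Hc2 d36 s1 s2 N3p N6q).
have D45 w : segP a oq None w -> segP a c1 None w -> False.
  by move=> s1 s2; exact: (seg_disj Htc Hoq Hc1 d45 s1 s2 N4p N5q).
have D46 w : segP a oq None w -> segP a c2 None w -> False.
  by move=> s1 s2; exact: (seg_disj Htc Hoq Hc2 d46 s1 s2 N4p N6q).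
have D56 w : segP a c1 None w -> segP a c2 None w -> False.
  by move=> s1 s2; exact: (seg_disj Htc Hc1 Hc2 nc s1 s2 N5p N6p).
pose x1 := iter k1 (ch a) c1; pose x2 := iter k2 (ch a) c2.
pose x3 := iter k3 (ch a) oq; pose x4 := iter k4 (ch a) or.
exists x1, x2, x3, x4; split; first by split.
exists r, q, p, (traject (ch a) ar kq.+1), (traject (ch a) or k4.+1),
  (traject (ch a) aq kp.+1), (traject (ch a) oq k3.+1),
  (traject (ch a) c1 k1.+1), (traject (ch a) c2 k2.+1).
have dp : forall u x k, a u x -> (forall i, i < k -> ~~ is_leaf a (iter i (ch a) x)) ->
    dpath a u (iter k (ch a) x) (traject (ch a) x k.+1).
  by move=> u x k hx hnl; rewrite /dpath /= hx path_traj // last_traject eqxx.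
split; [split|split].
- by rewrite {1}eqq; apply: dp.
- exact: dp.
- by rewrite {1}ep; apply: dp.
- exact: dp.
- exact: dp.
- exact: dp.
rewrite !interior_traj.
set M := traject (ch a) ar kq ++ (traject (ch a) or k4.+1 ++ (traject (ch a) aq kp ++
  (traject (ch a) oq k3.+1 ++ (traject (ch a) c1 k1.+1 ++ (traject (ch a) c2 k2.+1
  ++ [:: r; q; p]))))).
have PM : perm_eq (flatten [:: traject (ch a) ar kq; traject (ch a) or k4;
    traject (ch a) aq kp; traject (ch a) oq k3; traject (ch a) c1 k1; traject (ch a) c2 k2]
    ++ [:: r; q; p; x1; x2; x3; x4]) M.
  apply/permP => P; rewrite /M !trajectSr -!cats1 /= !count_cat /=; exact: arith7.
rewrite (perm_uniq PM) /M.
have U1 : uniq (traject (ch a) ar kq).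
  by have := uniq_traj Hac Htc hq; rewrite trajectSr rcons_uniq => /andP [].
have U3 : uniq (traject (ch a) aq kp).
  by have := uniq_traj Hac Htc hp; rewrite trajectSr rcons_uniq => /andP [].
have U2 := uniq_traj Hac Htc h4.
have U4 := uniq_traj Hac Htc h3.
have U5 := uniq_traj Hac Htc h1.
have U6 := uniq_traj Hac Htc h2.
have m1 w : w \in traject (ch a) ar kq -> segP a ar (Some q) w.
  by move=> hw; rewrite eqq; exact: memT Hac Htc hq hw.
have m3 w : w \in traject (ch a) aq kp -> segP a aq (Some p) w.
  by move=> hw; rewrite ep; exact: memT Hac Htc hp hw.
have m2 w : w \in traject (ch a) or k4.+1 -> segP a or None w := @memF _ _ _ _ w.
have m4 w : w \in traject (ch a) oq k3.+1 -> segP a oq None w := @memF _ _ _ _ w.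
have m5 w : w \in traject (ch a) c1 k1.+1 -> segP a c1 None w := @memF _ _ _ _ w.
have m6 w : w \in traject (ch a) c2 k2.+1 -> segP a c2 None w := @memF _ _ _ _ w.
apply: uniq_catD => [//||w /m1 s1]; last by rewrite ?mem_cat => H; disj_close s1.
apply: uniq_catD => [//||w /m2 s1]; last by rewrite ?mem_cat => H; disj_close s1.
apply: uniq_catD => [//||w /m3 s1]; last by rewrite ?mem_cat => H; disj_close s1.
apply: uniq_catD => [//||w /m4 s1]; last by rewrite ?mem_cat => H; disj_close s1.
apply: uniq_catD => [//||w /m5 s1]; last by rewrite ?mem_cat => H; disj_close s1.
apply: uniq_catD => [//||w /m6 s1]; last by rewrite ?mem_cat => H; disj_close s1.
by rewrite /= !inE negb_or nrq nrp nqp.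
Qed.


Lemma leaf_not_tree (V : finType) (a : rel V) v : is_leaf a v -> is_tree_vertex a v -> False.
Proof. by case/andP => _ /eqP h /andP [_]; rewrite h. Qed.
Lemma leaf_not_ret (V : finType) (a : rel V) v : is_leaf a v -> is_reticulation a v -> False.
Proof. by case/andP => /eqP h _ /andP []; rewrite h. Qed.
Lemma tree_not_ret (V : finType) (a : rel V) v : is_tree_vertex a v -> is_reticulation a v -> False.
Proof. by case/andP => /eqP h _ /andP []; rewrite h. Qed.

Lemma ret_child (V : finType) (a : rel V) x v : tree_child a ->
  is_reticulation a x -> a x v -> v = ch a x.
Proof.
move=> Htc hx hv.
have nl : ~~ is_leaf a x.
  by apply/negP => hl; apply: (leaf_not_ret hl hx).
case/andP: (ch_spec Htc nl) => hc _.
by case/andP: hx => _ /eqP h1; apply: (outdeg1_uniq h1).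
Qed.

Lemma root_uniq (V : finType) (a : rel V) rho v : phylo_network a -> is_root a rho ->
  is_root a v -> v = rho.
Proof.
move=> [_ [rho' [Hr' Hcls]]] Hr Hv.
have cl : forall z, is_root a z -> z = rho'.
  move=> z hz; apply/eqP; apply/negPn/negP => ne.
  by case/or3P: (Hcls z ne) => /andP [/eqP h _]; case/andP: hz => /eqP h' _; rewrite h' in h.
by rewrite (cl v Hv) (cl rho Hr).
Qed.

Lemma classify (V : finType) (a : rel V) rho v : phylo_network a -> is_root a rho ->
  [\/ v = rho, is_leaf a v, is_tree_vertex a v | is_reticulation a v].
Proof.
move=> Hpn Hr; case: (eqVneq v rho) => [e|ne]; first by constructor 1.
case: (Hpn) => _ [rho' [Hr' Hcls]].
have e : rho' = rho by apply: root_uniq Hpn Hr Hr'.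
subst rho'; by case/or3P: (Hcls v ne) => h; [constructor 2|constructor 3|constructor 4].
Qed.

Lemma parent_out2 (V : finType) (a : rel V) rho y x : phylo_network a -> is_root a rho ->
  tree_child a -> a y x -> is_reticulation a x -> outdeg a y = 2.
Proof.
move=> Hpn Hr Htc hy hx.
case: (classify y Hpn Hr) => [->|hy'|hy'|hy'].
- by case/andP: Hr => _ /eqP.
- by case/andP: hy' => _ /eqP h; move: (outdeg0_no x h); rewrite hy.
- by case/andP: hy' => _ /eqP.
have nl : ~~ is_leaf a y by apply/negP => hl; apply: (leaf_not_ret hl hy').
case: (Htc y nl) => w /andP [hw tw].
case/andP: hy' => _ /eqP h1; have e := outdeg1_uniq h1 hw hy; subst w.
by case/orP: tw => [t|l]; [case: (tree_not_ret t hx) | case: (leaf_not_ret l hx)].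
Qed.

Definition pre (V : finType) (a : rel V) u w :=
  outdeg a u = 2 /\ is_tree_vertex a w /\ exists c, a u c /\ tp a c w.

Lemma out2_tree (V : finType) (a : rel V) rho y : phylo_network a -> is_root a rho ->
  y != rho -> outdeg a y = 2 -> is_tree_vertex a y.
Proof.
move=> Hpn Hr ne ho; case: (classify y Hpn Hr) => [e|h|h|h] //.
- by rewrite e eqxx in ne.
- by case/andP: h => _ /eqP; rewrite ho.
- by case/andP: h => _ /eqP; rewrite ho.
Qed.

Lemma has_pre (V : finType) (a : rel V) rho v : normal_network a -> is_root a rho ->
  is_tree_vertex a v -> exists u, pre a u v.
Proof.
move=> [Hpn Htc Hns] Hr hv.
have : 0 < indeg a v by case/andP: hv => /eqP ->.
case/card_gt0P => x; rewrite inE => hx.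
case: (classify x Hpn Hr) => [e|h|h|h].
- exists x; split; first by rewrite e; case/andP: Hr => _ /eqP.
  by split => //; exists v; split => //; exact: tp_refl.
- by case/andP: h => _ /eqP h; move: (outdeg0_no v h); rewrite hx.
- exists x; split; first by case/andP: h => _ /eqP.
  by split => //; exists v; split => //; exact: tp_refl.
have : 0 < indeg a x by case/andP: h => /eqP ->.
case/card_gt0P => y; rewrite inE => hy.
exists y; split; first exact: (parent_out2 Hpn Hr Htc hy h).
split => //; exists x; split => //; rewrite (ret_child Htc h hx); exact: tp_ch.
Qed.

Lemma card_pred_le (T : finType) (P : pred T) (s : seq T) :
  (forall v, P v -> v \in s) -> #|[pred v | P v]| <= size s.
Proof.
move=> H; apply: leq_trans (card_size s); apply: subset_leq_card.
by apply/subsetP => v; rewrite inE; exact: H.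
Qed.


Lemma no_chain_small (V : finType) (a : rel V) rho : normal_network a -> is_root a rho ->
  ~ (exists r q p, pre a r q /\ pre a q p) ->
  [/\ num_reticulations a <= 1, num_leaves a <= 4 &
      (0 < num_reticulations a -> num_leaves a <= 3)].
Proof.
move=> Hn Hr NC; case: (Hn) => Hpn Htc Hns.
have Hac := Hpn.1.
have tpar : forall v x, is_tree_vertex a v -> a x v -> x = rho.
  move=> v x hv hx; case: (classify x Hpn Hr) => [//|h|h|h].
  - by case/andP: h => _ /eqP h; move: (outdeg0_no v h); rewrite hx.
  - case: (has_pre Hn Hr h) => z hz; exfalso; apply: NC; exists z, x, v; split => //.
    split; first by case/andP: h => _ /eqP.
    by split => //; exists v; split => //; exact: tp_refl.
  - have [y [hy ny]] : exists y, a y x /\ y != rho.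
      case/andP: (h) => /eqP /indeg2_two [y1 [y2 [h1 h2 n12]]] _.
      case: (eqVneq y1 rho) => e; last by exists y1.
      by exists y2; split => //; rewrite -e eq_sym.
    have ty := out2_tree Hpn Hr ny (parent_out2 Hpn Hr Htc hy h).
    case: (has_pre Hn Hr ty) => z hz; exfalso; apply: NC; exists z, y, v; split => //.
    split; first exact: (parent_out2 Hpn Hr Htc hy h).
    by split => //; exists x; split => //; rewrite (ret_child Htc h hx); exact: tp_ch.
have tree_par : forall y, is_tree_vertex a y -> a rho y.
  move=> y hy; have : 0 < indeg a y by case/andP: hy => /eqP ->.
  by case/card_gt0P => x; rewrite inE => hx; rewrite -(tpar y x hy hx).
have retpar : forall h y, is_reticulation a h -> a y h -> is_tree_vertex a y /\ a rho y.
  move=> h y hh hy.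
  have ny : y != rho.
    apply/eqP => ey; subst y.
    case/andP: (hh) => /eqP /indeg2_two [y1 [y2 [h1 h2 n12]]] _.
    have [y' [hy' ny']] : exists y', a y' h /\ y' != rho.
      case: (eqVneq y1 rho) => e; last by exists y1.
      by exists y2; split => //; rewrite -e eq_sym.
    have ty := out2_tree Hpn Hr ny' (parent_out2 Hpn Hr Htc hy' hh).
    have nn : rho != y' by rewrite eq_sym.
    exact: (shared Hpn Hns hy hy' nn (connect1 (tree_par _ ty))).
  have ty := out2_tree Hpn Hr ny (parent_out2 Hpn Hr Htc hy hh).
  by split => //; apply: tree_par.
have : 1 < #|[pred w | a rho w]| by rewrite -/(outdeg a rho); case/andP: Hr => _ /eqP ->.
case/card_gt1P => c1 [c2 []]; rewrite !inE => hc1 hc2 n12.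
have ro2 : outdeg a rho = 2 by case/andP: Hr => _ /eqP.
have rchild : forall w, a rho w -> w = c1 \/ w = c2.
  move=> w hw; case: (eqVneq w c1) => [|n1]; first by left.
  case: (eqVneq w c2) => [|n2]; first by right.
  by case: (outdeg2_three ro2 hw hc1 hc2 n1 n2 n12).
have retc : forall h, is_reticulation a h -> a c1 h /\ a c2 h.
  move=> h hh; case/andP: (hh) => /eqP /indeg2_two [y1 [y2 [h1 h2 ny]]] _.
  case: (rchild y1 (retpar h y1 hh h1).2) => e1;
  case: (rchild y2 (retpar h y2 hh h2).2) => e2; subst.
  - by rewrite eqxx in ny.
  - by [].
  - by [].
  - by rewrite eqxx in ny.
have runiq : forall h h', is_reticulation a h -> is_reticulation a h' -> h = h'.
  move=> h h' hh hh'; apply/eqP/negPn/negP => nh.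
  case: (retc h hh) => a1 _; case: (retc h' hh') => a1' _.
  have t1 := (retpar h c1 hh a1).1.
  have nl : ~~ is_leaf a c1 by apply/negP => l; apply: (leaf_not_tree l t1).
  case: (Htc c1 nl) => w /andP [hw tw].
  have nwh : forall z, is_reticulation a z -> w != z.
    move=> z hz; apply/eqP => e; subst z.
    by case/orP: tw => [t|l]; [apply: (tree_not_ret t hz) | apply: (leaf_not_ret l hz)].
  have o2 : outdeg a c1 = 2 by case/andP: t1 => _ /eqP.
  by case: (outdeg2_three o2 hw a1 a1' (nwh h hh) (nwh h' hh') nh).
have nret1 : num_reticulations a <= 1.
  apply/card_le1_eqP => h h'; rewrite !inE => hh hh'; by rewrite (runiq h h' hh hh').
have cover : forall l, is_leaf a l -> exists c, a rho c /\
    (l = c \/ a c l \/ exists h, is_reticulation a h /\ a c h /\ a h l).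
  move=> l hl; have : 0 < indeg a l by case/andP: hl => /eqP ->.
  case/card_gt0P => x; rewrite inE => hx.
  case: (classify x Hpn Hr) => [e|h|h|h].
  - by subst x; exists l; split => //; left.
  - by case/andP: h => _ /eqP h; move: (outdeg0_no l h); rewrite hx.
  - by exists x; split; [exact: tree_par | right; left].
  - exists c1; split => //; right; right; exists x; split => //; split => //.
    exact: (retc x h).1.
have rho_nt : ~ is_tree_vertex a rho.
  by case/andP: Hr => /eqP i0 _ /andP [/eqP]; rewrite i0.
have part : forall c, a rho c -> exists s : seq V, size s = 2 /\ forall l, is_leaf a l ->
    (l = c \/ a c l \/ exists h, is_reticulation a h /\ a c h /\ a h l) -> l \in s.
  move=> c hc; case: (classify c Hpn Hr) => [e|h|h|h].
  - by subst; case: (noback Hac hc (connect0 _ _)).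
  - case/andP: (h) => _ /eqP h0.
    exists [:: c; c]; split => // l hl [->|[hcl|[z [_ [hz _]]]]]; rewrite ?inE ?eqxx //.
      by rewrite (negbTE (outdeg0_no l h0)) in hcl.
    by rewrite (negbTE (outdeg0_no z h0)) in hz.
  - have o2 : outdeg a c = 2 by case/andP: h => _ /eqP.
    have : 1 < #|[pred w | a c w]| by rewrite -/(outdeg a c) o2.
    case/card_gt1P => d [e []]; rewrite !inE => hd he nde.
    have allc : forall w, a c w -> w = d \/ w = e.
      move=> w hw; case: (eqVneq w d) => [|n1]; first by left.
      case: (eqVneq w e) => [|n2]; first by right.
      by case: (outdeg2_three o2 hw hd he n1 n2 nde).
    exists [:: ch a d; ch a e]; split => // l hl [e1|[hcl|[z [hz [hcz hzl]]]]].
    + by subst l; case: (leaf_not_tree hl h).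
    + by case: (allc l hcl) => e'; subst; rewrite !inE (ch_leaf hl) eqxx ?orbT.
    + by rewrite (ret_child Htc hz hzl); case: (allc z hcz) => ->; rewrite !inE eqxx ?orbT.
  - by case: rho_nt; exact: (retpar c rho h hc).1.
split => //.
- case: (part c1 hc1) => s1 [z1 H1]; case: (part c2 hc2) => s2 [z2 H2].
  apply: (leq_trans (card_pred_le (P := is_leaf a) (s := s1 ++ s2) _)); last first.
    by rewrite size_cat z1 z2.
  move=> l hl; case: (cover l hl) => c [hc Hc]; rewrite mem_cat.
  by case: (rchild c hc) => e; subst c; [rewrite H1 | rewrite H2 ?orbT].
- case/card_gt0P => h0; rewrite inE => hh0.
  case: (retc h0 hh0) => a10 a20.
  have t1 := (retpar h0 c1 hh0 a10).1; have t2 := (retpar h0 c2 hh0 a20).1.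
  have o21 : outdeg a c1 = 2 by case/andP: t1 => _ /eqP.
  have o22 : outdeg a c2 = 2 by case/andP: t2 => _ /eqP.
  case: (outdeg2_other o21 a10) => e1 [ae1 ne1].
  case: (outdeg2_other o22 a20) => e2 [ae2 ne2].
  have allc : forall c e, outdeg a c = 2 -> a c h0 -> a c e -> e != h0 ->
      forall w, a c w -> w = h0 \/ w = e.
    move=> c e o2 hd he nde w hw; case: (eqVneq w h0) => [|n1]; first by left.
    case: (eqVneq w e) => [|n2]; first by right.
    by case: (outdeg2_three o2 hw hd he n1 n2); rewrite eq_sym.
  apply: (leq_trans (card_pred_le (P := is_leaf a) (s := [:: ch a e1; ch a h0; ch a e2]) _)) => //.
  move=> l hl; case: (cover l hl) => c [hc [e|[hcl|[z [hz [hcz hzl]]]]]].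
  + subst l; case: (rchild c hc) => e; subst c.
    * by case: (leaf_not_tree hl t1).
    * by case: (leaf_not_tree hl t2).
  + case: (rchild c hc) => e; subst c.
    * case: (allc _ _ o21 a10 ae1 ne1 l hcl) => e; subst.
        by case: (leaf_not_ret hl hh0).
      by rewrite !inE (ch_leaf hl) eqxx.
    * case: (allc _ _ o22 a20 ae2 ne2 l hcl) => e; subst.
        by case: (leaf_not_ret hl hh0).
      by rewrite !inE (ch_leaf hl) eqxx ?orbT.
  + by rewrite (ret_child Htc hz hzl) (runiq z h0 hz hh0) !inE eqxx ?orbT.
Qed.


Theorem mainTheorem8 (V : finType) (a : rel V) :
  normal_network a ->
  [\/ (1 <= num_reticulations a) && (4 <= num_leaves a),
      2 <= num_reticulations a
    | 5 <= num_leaves a] ->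
  displays_a_quad a.
Proof.
move=> Hn H; case: (Hn) => Hpn Htc Hns; case: (Hpn) => Hac [rho [Hr _]].
case: (classic (exists r q p, pre a r q /\ pre a q p)) =>
  [[r [q [p [[or2 [tq [ar [har tar]]]] [oq2 [tpv [aq [haq taq]]]]]]]] | NC].
- case: (outdeg2_other or2 har) => or [hor nor].
  case: (outdeg2_other oq2 haq) => oq [hoq noq].
  have op2 : outdeg a p = 2 by case/andP: tpv => _ /eqP.
  have : 0 < outdeg a p by rewrite op2.
  case/card_gt0P => c1; rewrite inE => hc1.
  case: (outdeg2_other op2 hc1) => c2 [hc2 nc].
  have nlq : ~~ is_leaf a q by apply/negP => l; apply: (leaf_not_tree l tq).
  have nlp : ~~ is_leaf a p by apply/negP => l; apply: (leaf_not_tree l tpv).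
  apply: (quad_of_chain Hn har hor _ haq hoq _ hc1 hc2 _ tar taq nlq nlp);
    by rewrite eq_sym.
- case: (no_chain_small Hn Hr NC) => h1 h2 h3.
  case: H => [/andP [k1 n4]|k2|n5].
  + by move: (h3 k1); rewrite leqNgt n4.
  + by move: h1; rewrite leqNgt (leq_trans _ k2).
  + by move: h2; rewrite leqNgt n5.
Qed.
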